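(* In a finite dynamic game as described in the context, let $K=(K^i)_{i\in\mathcal{I}}$ be compressed information. Suppose that for every player $i$ and every profile $\rho^{-i}$ of $K^j$-based strategies of players $j\neq i$ there exist functions $\Phi_t^{i,\rho^{-i}}:\mathcal{K}_t^i\to\Delta(\mathcal{X}_t\times\mathcal{K}_t^{-i})$, $t\in\mathcal{T}$, such that $$\Pr^{g^i,\rho^{-i}}(x_t,k_t^{-i}\mid h_t^i)=\Phi_t^{i,\rho^{-i}}(x_t,k_t^{-i}\mid k_t^i)$$ for all behavioral strategies $g^i$ of player $i$, all $t\in\mathcal{T}$, and all $h_t^i$ admissible under $(g^i,\rho^{-i})$. Then $K$ is mutually sufficient information.
   Context: Game model: finite set of players $\mathcal{I}$, times $\mathcal{T}=\{1,\dots,T\}$. At time $t$ each player $i$ takes action $U_t^i\in\mathcal{U}_t^i$, obtains reward $R_t^i\in[-1,1]$ and learns new information $Z_t^i\in\mathcal{Z}_t^i$. There is a state $X_t\in\mathcal{X}_t$ with $(X_{t+1},Z_t,R_t)=f_t(X_t,U_t,W_t)$ for fixed functions $f_t$. Primitive random variables $(X_1,H_1)$ and $W_1,\dots,W_T$ are mutually independent with commonly known distributions. All sets are finite. Perfect recall: $H_t^i=(H_1^i,Z_{1:t-1}^i)\in\mathcal{H}_t^i$, and $U_t^i$ is a component of $Z_t^i$. Behavioral strategy $g_t^i:\mathcal{H}_t^i\to\Delta(\mathcal{U}_t^i)$. A realization is admissible under a partial profile if it has positive probability under some completion of it. Compression: $K_1^i=\iota_1^i(H_1^i)$, $K_t^i=\iota_t^i(K_{t-1}^i,Z_{t-1}^i)$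 for fixed maps, finite value sets $\mathcal{K}_t^i$; $k_t^i$ is the compression of $h_t^i$; $K_t^{-i}=(K_t^j)_{j\ne i}$; a $K^i$-based strategy has $\rho_t^i:\mathcal{K}_t^i\to\Delta(\mathcal{U}_t^i)$. Information state: given $g^{-i}$, $K^i$ is an information state under $g^{-i}$ if there exist $P_t^{i,g^{-i}}:\mathcal{K}_t^i\times\mathcal{U}_t^i\to\Delta(\mathcal{K}_{t+1}^i)$, $r_t^{i,g^{-i}}:\mathcal{K}_t^i\times\mathcal{U}_t^i\to[-1,1]$ (independent of $g^i$) with $\Pr^{g^i,g^{-i}}(k_{t+1}^i\mid h_t^i,u_t^i)=P_t^{i,g^{-i}}(k_{t+1}^i\mid k_t^i,u_t^i)$ ($t<T$) and $\mathbb{E}^{g^i,g^{-i}}[R_t^i\mid h_t^i,u_t^i]=r_t^{i,g^{-i}}(k_t^i,u_t^i)$ for all $g^i$ and all $(h_t^i,u_t^i)$ admissible under $(g^i,g^{-i})$. $K$ is mutually sufficient information if for every $i$ and every profile $\rho^{-i}$ of $K^j$-based strategies ($j\ne i$), $K^i$ is an information state under $\rho^{-i}$. *)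

(* Defs.v *)
From HB Require Import structures.
From mathcomp Require Import all_boot all_order all_algebra.
Set Implicit Arguments. Unset Strict Implicit. Unset Printing Implicit Defensive.
Import Order.TTheory GRing.Theory Num.Theory.
Local Open Scope ring_scope.

Definition isDist (R : numDomainType) (T : finType) (p : T -> R) : Prop :=
  (forall x, 0 <= p x) /\ \sum_(x : T) p x = 1.

(* Times are 0-based: t = 0, ..., TT-1 correspond to 1, ..., T of the paper. *)
Record game (R : realFieldType) := Game {
  Pl : finType;
  TT : nat;
  Xs : nat -> finType;
  Us : nat -> Pl -> finType;
  Zs : nat -> Pl -> finType;
  Ws : nat -> finType;
  H1s : Pl -> finType;
  fX : forall t, Xs t -> {dffun forall i, Us t i} -> Ws t -> Xs t.+1;
  fZ : forall t, Xs t -> {dffun forall i, Us t i} -> Ws t -> forall i, Zs t i;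
  fR : forall t, Xs t -> {dffun forall i, Us t i} -> Ws t -> Pl -> R;
  P1 : Xs 0 -> {dffun forall i, H1s i} -> R;
  PW : forall t, Ws t -> R;
  actZ : forall t i, Zs t i -> Us t i;       (* U_t^i is a component of Z_t^i *)
  P1_dist : isDist (fun p : (Xs 0 * {dffun forall i, H1s i})%type => P1 p.1 p.2);
  PW_dist : forall t, isDist (@PW t);
  fR_bound : forall t x u w i, -1 <= @fR t x u w i <= 1;
  actZ_spec : forall t x u w i, @actZ t i (@fZ t x u w i) = u i
}.

Section Game.
Variables (R : realFieldType) (G : game R).

Local Notation I := (Pl G).
Local Notation X := (@Xs R G).
Local Notation U := (@Us R G).
Local Notation Z := (@Zs R G).
Local Notation W := (@Ws R G).

(* Perfect recall: H_t^i = (H_1^i, Z_1^i, ..., Z_{t-1}^i). *)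
Fixpoint hist (i : I) (t : nat) : finType :=
  match t with
  | 0 => @H1s R G i
  | s.+1 => (hist i s * Z s i)%type
  end.

Definition actions t := {dffun forall i : I, U t i}.
Definition jhist t := {dffun forall i : I, hist i t}.
Definition world t := (X t * jhist t)%type.

Definition strat (i : I) := forall t, hist i t -> U t i -> R.
Definition valid_strat (i : I) (g : strat i) :=
  forall t h, isDist (g t h).
Definition profile := forall i : I, strat i.

Definition next t (y : world t) (a : actions t) (w : W t) : world t.+1 :=
  (fX y.1 a w, @finfun I (fun i => hist i t.+1) (fun i => (y.2 i, fZ y.1 a w i))).

Definition aprob (g : profile) t (y : world t) (a : actions t) : R :=
  \prod_(j : I) g j t (y.2 j) (a j).

Fixpoint mu (g : profile) (t : nat) : world t -> R :=
  match t as t0 return world t0 -> R with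
  | 0 => fun y => P1 y.1 y.2
  | s.+1 => fun y =>
      \sum_(y0 : world s) \sum_(a : actions s) \sum_(w : W s)
        mu g y0 * aprob g y0 a * PW w * (y == next y0 a w)%:R
  end.

Definition wgt (g : profile) t (y : world t) (a : actions t) (w : W t) : R :=
  mu g y * aprob g y a * PW w.

Definition pprofile (i : I) := forall j : I, j != i -> strat j.

Definition mix (i : I) (g : strat i) (gm : pprofile i) : profile :=
  fun j => match @eqP I j i with
           | ReflectT e => eq_rect i strat g j (esym e)
           | ReflectF ne => gm j (introN eqP ne)
           end.

Definition valid_pprofile (i : I) (gm : pprofile i) :=
  forall j (nj : j != i), valid_strat (gm j nj).

Record compression := Compression {
  Ks : nat -> I -> finType;
  iota1 : forall i, @H1s R G i -> Ks 0 i;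
  iota : forall t i, Ks t i -> Z t i -> Ks t.+1 i
}.

Variable C : compression.
Local Notation K := (Ks C).

Fixpoint comp (i : I) (t : nat) : hist i t -> K t i :=
  match t as t0 return hist i t0 -> K t0 i with
  | 0 => fun h => @iota1 C i h
  | s.+1 => fun h => @iota C s i (comp h.1) h.2
  end.

Definition kmi (i : I) t := {dffun forall j : {j : I | j != i}, K t (val j)}.
Definition kmi_of (i : I) t (y : world t) : kmi i t :=
  @finfun _ (fun j : {j : I | j != i} => K t (val j))
    (fun j => comp (y.2 (val j))).

Definition kstrat (i : I) := forall t, K t i -> U t i -> R.
Definition valid_kstrat (i : I) (rho : kstrat i) := forall t k, isDist (rho t k).
Definition kstrat_strat (i : I) (rho : kstrat i) : strat i :=
  fun t h u => rho t (comp h) u.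
Definition kpprofile (i : I) := forall j : I, j != i -> kstrat j.
Definition valid_kpprofile (i : I) (rho : kpprofile i) :=
  forall j (nj : j != i), valid_kstrat (rho j nj).
Definition kpp_pp (i : I) (rho : kpprofile i) : pprofile i :=
  fun j nj => kstrat_strat (rho j nj).

Definition PrH (g : profile) (i : I) t (h : hist i t) : R :=
  \sum_(y : world t) (y.2 i == h)%:R * mu g y.
Definition PrHXK (g : profile) (i : I) t (h : hist i t) (x : X t) (km : kmi i t) : R :=
  \sum_(y : world t)
     (y.2 i == h)%:R * (y.1 == x)%:R * (kmi_of i y == km)%:R * mu g y.
Definition PrHU (g : profile) (i : I) t (h : hist i t) (u : U t i) : R :=
  \sum_(y : world t) \sum_(a : actions t) \sum_(w : W t)
     (y.2 i == h)%:R * (a i == u)%:R * wgt g y a w.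
Definition PrHUK (g : profile) (i : I) t (h : hist i t) (u : U t i) (k : K t.+1 i) : R :=
  \sum_(y : world t) \sum_(a : actions t) \sum_(w : W t)
     (y.2 i == h)%:R * (a i == u)%:R *
     (comp ((next y a w).2 i) == k)%:R * wgt g y a w.
Definition ERHU (g : profile) (i : I) t (h : hist i t) (u : U t i) : R :=
  \sum_(y : world t) \sum_(a : actions t) \sum_(w : W t)
     (y.2 i == h)%:R * (a i == u)%:R * fR y.1 a w i * wgt g y a w.

Definition condK g i t (h : hist i t) (u : U t i) (k : K t.+1 i) :=
  PrHUK g h u k / PrHU g h u.
Definition condR g i t (h : hist i t) (u : U t i) := ERHU g h u / PrHU g h u.
Definition condXK g i t (h : hist i t) (x : X t) (km : kmi i t) :=
  PrHXK g h x km / PrH g h.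

Definition info_state (i : I) (gm : pprofile i) : Prop :=
  exists (P : forall t, K t i -> U t i -> K t.+1 i -> R)
         (r : forall t, K t i -> U t i -> R),
    (forall t k u, (t.+1 < TT G)%N -> isDist (P t k u)) /\
    (forall t k u, (t < TT G)%N -> -1 <= r t k u <= 1) /\
    forall g : strat i, valid_strat g ->
      forall t (h : hist i t) (u : U t i),
        (t < TT G)%N -> 0 < PrHU (mix g gm) h u ->
        ((t.+1 < TT G)%N ->
           forall k, condK (mix g gm) h u k = P t (comp h) u k) /\
        condR (mix g gm) h u = r t (comp h) u.

Definition mutually_sufficient : Prop :=
  forall (i : I) (rho : kpprofile i), valid_kpprofile rho ->
    info_state (kpp_pp rho).

Definition belief_condition : Prop :=
  forall (i : I) (rho : kpprofile i), valid_kpprofile rho ->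
    exists Phi : forall t, K t i -> (X t * kmi i t)%type -> R,
      (forall t k, (t < TT G)%N -> isDist (Phi t k)) /\
      forall g : strat i, valid_strat g ->
        forall t (h : hist i t), (t < TT G)%N ->
          0 < PrH (mix g (kpp_pp rho)) h ->
          forall (x : X t) (km : kmi i t),
            condXK (mix g (kpp_pp rho)) h x km = Phi t (comp h) (x, km).

End Game.

(* Main.v *)
Require Import Defs.
From mathcomp Require Import all_boot all_order all_algebra ring.
Set Implicit Arguments. Unset Strict Implicit. Unset Printing Implicit Defensive.
Import Order.TTheory GRing.Theory Num.Theory.
Local Open Scope ring_scope.

Lemma sum_dffun_prod (R : comRingType) (I : finType) (T_ : I -> finType)
  (F : forall i, T_ i -> R) :
  \sum_(a : {dffun forall i, T_ i}) \prod_i F i (a i) = \prod_i \sum_(x : T_ i) F i x.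
Proof.
pose P_ i := [ffun x : T_ i => F i x].
transitivity (\sum_(a : {dffun forall i, T_ i}) \prod_i P_ i (a i)).
  by apply: eq_bigr => a _; apply: eq_bigr => i _; rewrite ffunE.
transitivity (\prod_i \sum_(x : T_ i) P_ i x); last first.
  by apply: eq_bigr => i _; apply: eq_bigr => x _; rewrite ffunE.
rewrite (reindex (@dffun_of_fprod I T_)); last first.
  by apply: onW_bij; apply: dffun_of_fprod_bij.
transitivity (\sum_(t : fprod T_) \prod_(i in I) P_ i (t i)).
  by apply: eq_bigr => t _; apply: eq_big => // i _; rewrite /dffun_of_fprod ffunE.
rewrite big_fprod.
under [RHS]eq_bigr do rewrite (big_tag (fun i x => P_ i x)).
by rewrite bigA_distr_big_dep.
Qed.

Lemma prod_sig (R : comRingType) (T : finType) (P : pred T) (F : T -> R) :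
  \prod_(j | P j) F j = \prod_(s : {j : T | P j}) F (val s).
Proof.
rewrite (reindex_omap (val : {j : T | P j} -> T) insub); last first.
  by move=> j Pj; rewrite insubT.
by apply: eq_bigl => s; rewrite (valP s) valK eqxx.
Qed.

Lemma untag_Tagged (I : eqType) (T_ : I -> Type) (R : Type) (idx : R) (j : I)
  (F : T_ j -> R) (x : T_ j) : untag idx F (Tagged T_ x) = F x.
Proof. by rewrite (@untagE _ _ _ _ _ _ (Tagged T_ x) (erefl j)). Qed.



Lemma mix_i (R : realFieldType) (G : game R) (i : Pl G) (g : strat i) (gm : pprofile i) :
  @mix R G i g gm i = g.
Proof.
rewrite /mix /=; generalize (@eqP (Pl G) i i) at 1 => r.
refine (match r as r0 in reflect _ b0 return
  ((match r0 with ReflectT e => eq_rect i (@strat R G) g i (esym e)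
   | ReflectF ne => gm i (introN eqP ne) end) = g) with
  ReflectT e => _ | ReflectF ne => _ end); last by case: ne.
by rewrite (eq_axiomK e).
Qed.

Lemma mix_j (R : realFieldType) (G : game R) (i : Pl G) (g : strat i) (gm : pprofile i)
  (j : Pl G) (nj : j != i) : @mix R G i g gm j = gm j nj.
Proof.
rewrite /mix /=; generalize (@eqP (Pl G) j i) at 1 => r.
refine (match r as r0 in reflect _ b0 return
  ((match r0 with ReflectT e => eq_rect i (@strat R G) g j (esym e)
   | ReflectF ne => gm j (introN eqP ne) end) = gm j nj) with
  ReflectT e => _ | ReflectF ne => _ end); first by exfalso; move: nj; rewrite e eqxx.
by congr (gm j); apply: bool_irrelevance.
Qed.

Definition Qf (R : realFieldType) (G : game R) (C : compression G) (i : Pl G)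
  (rho : kpprofile C i) t (km : kmi C i t) (a : actions G t) : R :=
  \prod_(s : {j : Pl G | j != i}) rho (val s) (valP s) t (km s) (a (val s)).

Lemma aprob_mix (R : realFieldType) (G : game R) (C : compression G) (i : Pl G)
  (rho : kpprofile C i) (g : strat i) t (y : world G t) (a : actions G t) :
  aprob (mix g (kpp_pp rho)) y a = g t (y.2 i) (a i) * Qf rho (kmi_of C i y) a.
Proof.
rewrite /aprob (bigD1 i) //= mix_i; congr (_ * _).
rewrite (prod_sig (fun j => j != i)); apply: eq_bigr => s _.
by rewrite (mix_j _ _ (valP s)) /kpp_pp /kstrat_strat /kmi_of ffunE.
Qed.

Definition Fq (R : realFieldType) (G : game R) (C : compression G) (i : Pl G)
  (rho : kpprofile C i) t (km : kmi C i t) (u : Us t i) (j : Pl G) (x : Us t j) : R :=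
  match (insub j : option {j0 : Pl G | j0 != i}) with
  | Some s => untag 0 (rho (val s) (valP s) t (km s)) (Tagged (@Us R G t) x)
  | None => (Tagged (@Us R G t) x == Tagged (@Us R G t) u)%:R
  end.

Lemma sumQ (R : realFieldType) (G : game R) (C : compression G) (i : Pl G)
  (rho : kpprofile C i) : valid_kpprofile rho ->
  forall t (km : kmi C i t) (u : Us t i),
  \sum_(a : actions G t) (a i == u)%:R * Qf rho km a = 1.
Proof.
move=> Hrho t km u.
transitivity (\sum_(a : actions G t) \prod_j Fq rho km u (a j)).
  apply: eq_bigr => a _; rewrite (bigD1 i) //=; congr (_ * _).
    by rewrite /Fq insubN ?eqxx // eq_Tagged.
  rewrite (prod_sig (fun j => j != i)); apply: eq_bigr => s _.
  by rewrite /Fq valK untag_Tagged.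
rewrite sum_dffun_prod; apply: big1 => j _.
rewrite /Fq; case: insubP => [s _ Hv|Hn].
  subst j; under eq_bigr do rewrite untag_Tagged.
  exact: (Hrho _ (valP s) t (km s)).2.
have e : j = i by apply/eqP; rewrite negbK in Hn.
subst j; rewrite (bigD1 u) //= eq_Tagged eqxx big1 ?addr0 // => x Hx.
by rewrite eq_Tagged (negbTE Hx).
Qed.

Lemma sum_decomp (R : realFieldType) (G : game R) (C : compression G) (g : profile G)
  (i : Pl G) t (h : hist i t) (f : Xs G t -> kmi C i t -> R) :
  \sum_(y : world G t) (y.2 i == h)%:R * mu g y * f y.1 (kmi_of C i y) =
  \sum_(p : (Xs G t * kmi C i t)%type) @PrHXK R G C g i t h p.1 p.2 * f p.1 p.2.
Proof.
rewrite /PrHXK; under [RHS]eq_bigr do rewrite big_distrl.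
rewrite [RHS]exchange_big /=; apply: eq_bigr => y _.
rewrite (bigD1 (y.1, kmi_of C i y)) //= !eqxx big1 ?addr0; last first.
  move=> p Hp.
  case: (eqVneq y.1 p.1) => [ex|nx]; last by rewrite /= mulr0n; ring.
  case: (eqVneq (kmi_of C i y) p.2) => [ek|nk]; last by rewrite /= mulr0n; ring.
  by move: Hp; rewrite ex ek -surjective_pairing eqxx.
by rewrite /= mulr1n; ring.
Qed.

Lemma L4 (R : realFieldType) (G : game R) (C : compression G) (i : Pl G)
  (rho : kpprofile C i) (g : strat i) t (h : hist i t) (u : Us t i)
  (f' : world G t -> actions G t -> Ws G t -> R)
  (f : Xs G t -> kmi C i t -> actions G t -> Ws G t -> R) :
  (forall (y : world G t) (a : actions G t) (w : Ws G t), y.2 i = h -> f' y a w = f y.1 (kmi_of C i y) a w) ->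
  \sum_(y : world G t) \sum_(a : actions G t) \sum_(w : Ws G t)
     (y.2 i == h)%:R * (a i == u)%:R * f' y a w * wgt (mix g (kpp_pp rho)) y a w
  = g t h u * \sum_(p : (Xs G t * kmi C i t)%type)
      @PrHXK R G C (mix g (kpp_pp rho)) i t h p.1 p.2 *
      (\sum_(a : actions G t) \sum_(w : Ws G t)
         (a i == u)%:R * Qf rho p.2 a * PW w * f p.1 p.2 a w).
Proof.
move=> Hf.
pose G0 x km := \sum_(a : actions G t) \sum_(w : Ws G t)
         (a i == u)%:R * Qf rho km a * PW w * f x km a w.
transitivity (\sum_(y : world G t) (y.2 i == h)%:R * mu (mix g (kpp_pp rho)) y *
   (g t h u * G0 y.1 (kmi_of C i y))).
  apply: eq_bigr => y _.
  case: (eqVneq (y.2 i) h) => [Hy|Hy]; last first.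
    rewrite /= mulr0n !mul0r; apply: big1 => a _; apply: big1 => w _; by rewrite !mul0r.
  rewrite /= mulr1n [in RHS]mul1r /G0 mulrA big_distrr; apply: eq_bigr => a _.
  rewrite big_distrr; apply: eq_bigr => w _.
  rewrite /wgt aprob_mix Hy (Hf y a w Hy).
  by case: (eqVneq (a i) u) => [->|Ha]; rewrite /= ?mulr1n ?mulr0n; ring.
rewrite (@sum_decomp R G C (mix g (kpp_pp rho)) i t h (fun x km => g t h u * G0 x km)).
rewrite big_distrr; apply: eq_bigr => p _ /=; rewrite /G0; ring.
Qed.

Lemma Qge0 (R : realFieldType) (G : game R) (C : compression G) (i : Pl G)
  (rho : kpprofile C i) : valid_kpprofile rho ->
  forall t (km : kmi C i t) (a : actions G t), 0 <= Qf rho km a.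
Proof.
move=> Hrho t km a; apply: prodr_ge0 => s _; exact: (Hrho _ (valP s) t (km s)).1.
Qed.

Lemma sumAW (R : realFieldType) (G : game R) (C : compression G) (i : Pl G)
  (rho : kpprofile C i) : valid_kpprofile rho ->
  forall t (km : kmi C i t) (u : Us t i),
  \sum_(a : actions G t) \sum_(w : Ws G t) (a i == u)%:R * Qf rho km a * PW w = 1.
Proof.
move=> Hrho t km u; rewrite -[RHS](sumQ Hrho km u); apply: eq_bigr => a _.
by rewrite -big_distrr /= (PW_dist G t).2 mulr1.
Qed.

Lemma sum_ind (R : realFieldType) (T : finType) (z : T) :
  \sum_(k : T) (z == k)%:R = 1 :> R.
Proof.
rewrite (bigD1 z) //= eqxx big1 ?addr0 // => k Hk.
by rewrite eq_sym (negbTE Hk).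
Qed.

Theorem lemma1 (R : realFieldType) (G : game R) (C : compression G) :
  belief_condition C -> mutually_sufficient C.
Proof.
move=> HB i rho Hrho.
have [Phi [HPd HPhi]] := HB i rho Hrho.
pose Fk t (k : Ks C t i) (x : Xs G t) (km : kmi C i t) (u : Us t i) (k' : Ks C t.+1 i) :=
  \sum_(a : actions G t) \sum_(w : Ws G t)
    (a i == u)%:R * Qf rho km a * PW w * (Defs.iota k (fZ x a w i) == k')%:R.
pose Fr t (x : Xs G t) (km : kmi C i t) (u : Us t i) :=
  \sum_(a : actions G t) \sum_(w : Ws G t)
    (a i == u)%:R * Qf rho km a * PW w * fR x a w i.
have FkS : forall t k x km u, \sum_(k' : Ks C t.+1 i) Fk t k x km u k' = 1.
  move=> t k x km u; rewrite /Fk exchange_big /= -[RHS](sumAW Hrho km u).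
  apply: eq_bigr => a _; rewrite exchange_big /=; apply: eq_bigr => w _.
  by rewrite -big_distrr /= sum_ind mulr1.
have Fr1 : forall t x km u, `|Fr t x km u| <= 1.
  move=> t x km u; apply: le_trans (ler_norm_sum _ _ _) _.
  rewrite -[X in _ <= X](sumAW Hrho km u); apply: ler_sum => a _.
  apply: le_trans (ler_norm_sum _ _ _) _; apply: ler_sum => w _.
  have H0 : 0 <= (a i == u)%:R * Qf rho km a * PW w.
    by rewrite !mulr_ge0 ?ler0n ?(Qge0 Hrho) ?(PW_dist G t).1.
  rewrite normrM (ger0_norm H0); apply: ler_piMr => //.
  by rewrite ler_norml; apply: fR_bound.
exists (fun t k u k' => \sum_(p : (Xs G t * kmi C i t)%type) Phi t k p * Fk t k p.1 p.2 u k').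
exists (fun t k u => \sum_(p : (Xs G t * kmi C i t)%type) Phi t k p * Fr t p.1 p.2 u).
split; [|split].
- move=> t k u Ht; have Ht' : (t < TT G)%N by apply: ltnW.
  split.
    move=> k'; apply: sumr_ge0 => p _; apply: mulr_ge0; first exact: (HPd t k Ht').1.
    apply: sumr_ge0 => a _; apply: sumr_ge0 => w _.
    by rewrite !mulr_ge0 ?ler0n ?(Qge0 Hrho) ?(PW_dist G t).1.
  rewrite exchange_big /= -[RHS](HPd t k Ht').2; apply: eq_bigr => p _.
  by rewrite -big_distrr /= FkS mulr1.
- move=> t k u Ht; rewrite -ler_norml.
  apply: le_trans (ler_norm_sum _ _ _) _.
  rewrite -[X in _ <= X](HPd t k Ht).2; apply: ler_sum => p _.
  rewrite normrM ger0_norm ?(HPd t k Ht).1 //; apply: ler_piMr => //.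
  exact: (HPd t k Ht).1.
move=> g Hg t h u Ht Hpos.
set g' := mix g (kpp_pp rho).
have EH : PrHU g' h u = g t h u * PrH g' h.
  rewrite /PrHU.
  transitivity (\sum_(y : world G t) \sum_(a : actions G t) \sum_(w : Ws G t)
     (y.2 i == h)%:R * (a i == u)%:R * (fun _ _ _ => 1) y a w * wgt g' y a w).
    by apply: eq_bigr => y _; apply: eq_bigr => a _; apply: eq_bigr => w _; rewrite mulr1.
  rewrite (@L4 R G C i rho g t h u _ (fun _ _ _ _ => 1)) //; congr (_ * _).
  transitivity (\sum_(p : (Xs G t * kmi C i t)%type) @PrHXK R G C g' i t h p.1 p.2 * 1).
    by apply: eq_bigr => p _; under eq_bigr do under eq_bigr do rewrite mulr1; rewrite sumAW.
  rewrite -(@sum_decomp R G C g' i t h (fun _ _ => 1)) /PrH.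
  by apply: eq_bigr => y _; rewrite mulr1.
have gge0 : 0 <= g t h u by exact: (Hg t h).1.
have gpos : 0 < g t h u.
  rewrite lt_def gge0 andbT; apply/eqP => g0.
  by move: Hpos; rewrite EH g0 mul0r ltxx.
have Hpos' : 0 < PrH g' h by rewrite -(pmulr_rgt0 _ gpos) -EH.
have Hcond : forall p : (Xs G t * kmi C i t)%type,
    @PrHXK R G C g' i t h p.1 p.2 / PrH g' h = Phi t (Defs.comp C h) p.
  by move=> [x km]; exact: (HPhi g Hg t h Ht Hpos' x km).
have Hfin : forall (F : (Xs G t * kmi C i t)%type -> R),
    (g t h u * \sum_p @PrHXK R G C g' i t h p.1 p.2 * F p) / PrHU g' h u =
    \sum_p Phi t (Defs.comp C h) p * F p.
  move=> F; rewrite EH.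
  have -> : (g t h u * \sum_p @PrHXK R G C g' i t h p.1 p.2 * F p) / (g t h u * PrH g' h)
     = (\sum_p @PrHXK R G C g' i t h p.1 p.2 * F p) / PrH g' h.
    by field; apply/andP; split; rewrite lt0r_neq0.
  rewrite big_distrl; apply: eq_bigr => p _ /=; rewrite -Hcond; ring.
split.
- move=> Ht1 k'; rewrite /condK /PrHUK.
  rewrite (@L4 R G C i rho g t h u _
     (fun x km a w => (Defs.iota (Defs.comp C h) (fZ x a w i) == k')%:R)); last first.
    by move=> y a w Hy; rewrite /next /= ffunE /= Hy.
  exact: (Hfin (fun p => Fk t (Defs.comp C h) p.1 p.2 u k')).
- rewrite /condR /ERHU.
  rewrite (@L4 R G C i rho g t h u _ (fun x km a w => fR x a w i)); last by [].
  exact: (Hfin (fun p => Fr t p.1 p.2 u)).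
Qed.
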